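(* Let $H=(H,\Delta,\epsilon,\phi,S,\alpha,\beta)$ be a quasi-Hopf algebra over a field $k$, and let $K\subseteq H$ be a finite-dimensional subquasibialgebra (a subalgebra with $\Delta(K)\subseteq K\otimes K$ and $\phi\in K\otimes K\otimes K$) such that $$S(\phi^{(-1)})\alpha\phi^{(-2)}\otimes\phi^{(-3)}\in K\otimes K.$$ Then $\alpha,\beta\in K$ and $S(K)\subseteq K$, so $K$ is a quasi-Hopf subalgebra of $H$ (with quasi-antipode the restriction of $(S,\alpha,\beta)$).
   Context: A quasibialgebra $(H,\Delta,\epsilon,\phi)$ over a field $k$ consists of an algebra $H$, algebra maps $\Delta\colon H\to H\otimes H$, $h\mapsto h_{(1)}\otimes h_{(2)}$, and $\epsilon\colon H\to k$, and an invertible $\phi=\phi^{(1)}\otimes\phi^{(2)}\otimes\phi^{(3)}\in H^{\otimes 3}$ (with $\phi^{-1}=\phi^{(-1)}\otimes\phi^{(-2)}\otimes\phi^{(-3)}$) such that $(\epsilon\otimes H)\Delta(h)=h=(H\otimes\epsilon)\Delta(h)$; $(H\otimes\Delta)\Delta(h)\,\phi=\phi\,(\Delta\otimes H)\Delta(h)$; $(H\otimes H\otimes\Delta)(\phi)(\Delta\otimes H\otimes H)(\phi)=(1\otimes\phi)(H\otimes\Delta\otimes H)(\phi)(\phi\otimes 1)$; and $(H\otimes\epsilon\otimes H)(\phi)=1$. A quasi-antipode is a triple $(S,\alpha,\beta)$ with $\alpha,\beta\in H$ and $S$ an anti-algebra endomorphism of $H$ (not required to be bijective) such that for all $h\in H$: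 $S(h_{(1)})\alpha h_{(2)}=\epsilon(h)\alpha$, $h_{(1)}\beta S(h_{(2)})=\epsilon(h)\beta$, $\phi^{(1)}\beta S(\phi^{(2)})\alpha\phi^{(3)}=1$, $S(\phi^{(-1)})\alpha\phi^{(-2)}\beta S(\phi^{(-3)})=1$. A quasi-Hopf algebra is a quasibialgebra with a quasi-antipode. A quasi-Hopf subalgebra is a subquasibialgebra $K$ with $S(K)\subseteq K$ and $\alpha,\beta\in K$. *)

(* Defs.v *)
(* Tensor powers H^{(x)n} (n = 2,3,4) are represented by formal finite sums
   (sequences of tuples of elements of H); two formal sums denote the same
   tensor iff they agree under every product of linear functionals
   (over a field, V (x) W embeds into (V* (x) W* )*, so this is exactly
   equality in the tensor product). *)
From HB Require Import structures.
From mathcomp Require Import all_boot all_order all_algebra.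
Set Implicit Arguments. Unset Strict Implicit. Unset Printing Implicit Defensive.
Import GRing.Theory.
Local Open Scope ring_scope.

Section QuasiHopf.
Variables (k : fieldType) (H : algType k).

Definition tens2 := seq (H * H)%type.
Definition tens3 := seq (H * H * H)%type.
Definition tens4 := seq (H * H * H * H)%type.

Definition teq2 (t u : tens2) : Prop :=
  forall f g : {scalar H},
    \sum_(p <- t) f p.1 * g p.2 = \sum_(p <- u) f p.1 * g p.2.
Definition teq3 (t u : tens3) : Prop :=
  forall f g h : {scalar H},
    \sum_(p <- t) f p.1.1 * g p.1.2 * h p.2 =
    \sum_(p <- u) f p.1.1 * g p.1.2 * h p.2.
Definition teq4 (t u : tens4) : Prop :=
  forall f g h l : {scalar H},
    \sum_(p <- t) f p.1.1.1 * g p.1.1.2 * h p.1.2 * l p.2 =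
    \sum_(p <- u) f p.1.1.1 * g p.1.1.2 * h p.1.2 * l p.2.

Definition mul2 (t u : tens2) : tens2 :=
  [seq (p.1 * q.1, p.2 * q.2) | p <- t, q <- u].
Definition mul3 (t u : tens3) : tens3 :=
  [seq (p.1.1 * q.1.1, p.1.2 * q.1.2, p.2 * q.2) | p <- t, q <- u].
Definition mul4 (t u : tens4) : tens4 :=
  [seq (p.1.1.1 * q.1.1.1, p.1.1.2 * q.1.1.2, p.1.2 * q.1.2, p.2 * q.2)
  | p <- t, q <- u].
Definition one2 : tens2 := [:: (1, 1)].
Definition one3 : tens3 := [:: (1, 1, 1)].

Variables (Delta : H -> tens2) (eps : H -> k) (phi phiinv : tens3).

Definition id_Delta_Delta (h : H) : tens3 :=
  [seq (p.1, q.1, q.2) | p <- Delta h, q <- Delta p.2].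
Definition Delta_id_Delta (h : H) : tens3 :=
  [seq (q.1, q.2, p.2) | p <- Delta h, q <- Delta p.1].

Definition HHDelta_phi : tens4 :=
  [seq (p.1.1, p.1.2, q.1, q.2) | p <- phi, q <- Delta p.2].
Definition DeltaHH_phi : tens4 :=
  [seq (q.1, q.2, p.1.2, p.2) | p <- phi, q <- Delta p.1.1].
Definition one_phi : tens4 := [seq (1, p.1.1, p.1.2, p.2) | p <- phi].
Definition HDeltaH_phi : tens4 :=
  [seq (p.1.1, q.1, q.2, p.2) | p <- phi, q <- Delta p.1.2].
Definition phi_one : tens4 := [seq (p.1.1, p.1.2, p.2, 1) | p <- phi].

Record quasibialgebra : Prop := {
  Delta_linear : forall (a : k) (x y : H),
    teq2 (Delta (a *: x + y)) ([seq (a *: q.1, q.2) | q <- Delta x] ++ Delta y);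
  Delta_mul : forall x y : H, teq2 (Delta (x * y)) (mul2 (Delta x) (Delta y));
  Delta_one : teq2 (Delta 1) one2;
  eps_linear : forall (a : k) (x y : H), eps (a *: x + y) = a * eps x + eps y;
  eps_mul : forall x y : H, eps (x * y) = eps x * eps y;
  eps_one : eps 1 = 1;
  phi_inv_r : teq3 (mul3 phi phiinv) one3;
  phi_inv_l : teq3 (mul3 phiinv phi) one3;
  counit_l : forall h : H, \sum_(q <- Delta h) eps q.1 *: q.2 = h;
  counit_r : forall h : H, \sum_(q <- Delta h) eps q.2 *: q.1 = h;
  quasi_coassoc : forall h : H,
    teq3 (mul3 (id_Delta_Delta h) phi) (mul3 phi (Delta_id_Delta h));
  pentagon : teq4 (mul4 HHDelta_phi DeltaHH_phi)
                  (mul4 (mul4 one_phi HDeltaH_phi) phi_one);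
  phi_normal : teq2 [seq (p.1.1, eps p.1.2 *: p.2) | p <- phi] one2
}.

Variables (S : H -> H) (alpha beta : H).

Record quasi_antipode : Prop := {
  S_linear : forall (a : k) (x y : H), S (a *: x + y) = a *: S x + S y;
  S_antimul : forall x y : H, S (x * y) = S y * S x;
  S_one : S 1 = 1;
  antipode_alpha : forall h : H,
    \sum_(q <- Delta h) S q.1 * alpha * q.2 = eps h *: alpha;
  antipode_beta : forall h : H,
    \sum_(q <- Delta h) q.1 * beta * S q.2 = eps h *: beta;
  antipode_phi :
    \sum_(p <- phi) p.1.1 * beta * S p.1.2 * alpha * p.2 = 1;
  antipode_phiinv :
    \sum_(p <- phiinv) S p.1.1 * alpha * p.1.2 * beta * S p.2 = 1
}.

Definition quasi_hopf : Prop := quasibialgebra /\ quasi_antipode.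

Definition in_tensor2 (K : pred H) (t : tens2) : Prop :=
  exists u : tens2, (forall p, p \in u -> (p.1 \in K) && (p.2 \in K)) /\ teq2 t u.
Definition in_tensor3 (K : pred H) (t : tens3) : Prop :=
  exists u : tens3,
    (forall p, p \in u -> [&& p.1.1 \in K, p.1.2 \in K & p.2 \in K]) /\ teq3 t u.

Definition subquasibialgebra (K : pred H) : Prop :=
  [/\ 1 \in K,
      forall (a : k) (x y : H), x \in K -> y \in K -> a *: x + y \in K,
      forall x y : H, x \in K -> y \in K -> x * y \in K,
      forall x : H, x \in K -> in_tensor2 K (Delta x)
    & in_tensor3 K phi].

End QuasiHopf.

Definition finite_dim (k : fieldType) (H : lmodType k) (K : pred H) : Prop :=
  exists s : seq H, (forall x, x \in s -> x \in K) /\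
    forall x, x \in K -> exists c : 'I_(size s) -> k,
      x = \sum_(i < size s) c i *: s`_i.

(* Main.v *)
Require Import Defs.
From HB Require Import structures.
From mathcomp Require Import all_boot all_order all_algebra.
From mathcomp Require boolp classical_sets.
From mathcomp Require Import ring.
From Stdlib Require Import Setoid Morphisms.
Import GRing.Theory.
Local Open Scope ring_scope.

Module ProofAux.
Import boolp classical_sets.
Set Implicit Arguments. Unset Strict Implicit. Unset Printing Implicit Defensive.

Section MK.
Variables (k : fieldType) (H : lmodType k) (h : H -> k).
Hypothesis hl : forall a x y, h (a *: x + y) = a * h x + h y.
Definition hfun := h.
Lemma hfun_lin : linear_for *%R hfun. Proof. move=> a x y; exact: hl. Qed.
HB.instance Definition _ := GRing.isLinear.Build k H k^o *%R hfun hfun_lin.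
Definition mkscal : {scalar H} := hfun.
Lemma mkscalE x : mkscal x = h x. Proof. by []. Qed.
End MK.

Section Ext.
Variables (k : fieldType) (H : lmodType k).
Definition subsp (W : H -> Prop) := W 0 /\ forall a x y, W x -> W y -> W (a *: x + y).

Lemma subspN (W : H -> Prop) x : subsp W -> W x -> W (- x).
Proof. move=> [W0 Wc] Wx. by have := Wc (-1) x 0 Wx W0; rewrite addr0 scaleN1r. Qed.
Lemma subspD (W : H -> Prop) x y : subsp W -> W x -> W y -> W (x + y).
Proof. move=> [W0 Wc] Wx Wy. by have := Wc 1 x y Wx Wy; rewrite scale1r. Qed.
Lemma subspZ (W : H -> Prop) a x : subsp W -> W x -> W (a *: x).
Proof. move=> [W0 Wc] Wx. by have := Wc a x 0 Wx W0; rewrite addr0. Qed.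

Lemma ext_fun (W : H -> Prop) (x : H) : subsp W -> ~ W x ->
  exists h : {scalar H}, (forall y, W y -> h y = 0) /\ h x = 1.
Proof.
move=> sW nWx.
pose P (X : set H) := (forall t, ~ X t) \/ (subsp X /\ (forall y, W y -> X y) /\ ~ X x).
have chainP : forall F : set (set H), subset F P -> total_on F subset ->
    P (bigcup F id).
  move=> F FP tot.
  case: (pselect (exists X, F X /\ exists t, X t)) => [[X0 [FX0 [t0 X0t0]]]|none]; last first.
    by left => t [X FX Xt]; apply: none; exists X; split => //; exists t.
  have sub_of : forall X t, F X -> X t -> subsp X /\ (forall y, W y -> X y) /\ ~ X x.
    move=> X t FX Xt; case: (FP X FX) => // /(_ t); by [].
  have [sX0 [WX0 nX0]] := sub_of X0 t0 FX0 X0t0.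
  right; split; [split|split].
  - by exists X0 => //; case: sX0.
  - move=> a u v [X1 FX1 X1u] [X2 FX2 X2v].
    have [s1 _] := sub_of X1 u FX1 X1u; have [s2 _] := sub_of X2 v FX2 X2v.
    case: (tot X1 X2 FX1 FX2) => [S12|S21].
      by exists X2 => //; apply: s2.2 => //; apply: S12.
    by exists X1 => //; apply: s1.2 => //; apply: S21.
  - by move=> y Wy; exists X0 => //; apply: WX0.
  - by move=> [X FX Xx]; have [_ [_ nX]] := sub_of X x FX Xx; apply: nX.
have [A [PA maxA]] := Zorn_bigcup chainP.
have PW : P W by right; split => //.
have [sA [WA nAx]] : subsp A /\ (forall y, W y -> A y) /\ ~ A x.
  case: PA => // empty; exfalso; apply: (maxA W) => //; split.
    by move=> t /empty.
  by move=> WA; apply: (empty 0); apply: WA; case: sW.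
have uniq : forall y c c', A (y - c *: x) -> A (y - c' *: x) -> c = c'.
  move=> y c c' h1 h2; apply/eqP; apply/negP => /negP ncc.
  have : A ((c' - c) *: x).
    have -> : (c' - c) *: x = (y - c *: x) + - (y - c' *: x).
      by rewrite scalerBl opprB [_ + (_ - y)]addrC addrA subrK.
    by apply: subspD => //; apply: subspN.
  move=> /(subspZ (c' - c)^-1 sA); rewrite scalerA mulVf ?scale1r //.
  by rewrite subr_eq0 eq_sym.
have key : forall y, exists c, A (y - c *: x).
  move=> y; case: (pselect (A y)) => [Ay|nAy]; first by exists 0; rewrite scale0r subr0.
  pose B := fun z => exists a c, A a /\ z = a + c *: y.
  have sB : subsp B.
    split; first by exists 0, 0; rewrite scale0r addr0; split => //; case: sA.
    move=> a u v [a1 [c1 [A1 ->]]] [a2 [c2 [A2 ->]]].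
    exists (a *: a1 + a2), (a * c1 + c2); split; first by case: sA => _; apply.
    by rewrite scalerDr scalerDl scalerA addrACA.
  have AB : subset A B by move=> z Az; exists z, 0; rewrite scale0r addr0.
  have nPB : ~ P B.
    apply: maxA; split => // BA; apply: nAy; apply: BA; exists 0, 1.
    by rewrite scale1r add0r; split => //; case: sA.
  have Bx : B x.
    apply: contrapT => nBx; apply: nPB; right; split => //; split => //.
    by move=> z Wz; apply: AB; apply: WA.
  case: Bx => a [c [Aa xe]].
  have c0 : c != 0.
    by apply/eqP => c0; apply: nAx; rewrite xe c0 scale0r addr0.
  exists c^-1.
  have -> : y - c^-1 *: x = (- c^-1) *: a.
    by rewrite xe scalerDr scalerA mulVf // scale1r scaleNr opprD addrCA subrr addr0.
  by apply: subspZ.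
pose h y := projT1 (cid (key y)).
have hP : forall y, A (y - h y *: x) by move=> y; rewrite /h; case: cid.
have hl : forall a y z, h (a *: y + z) = a * h y + h z.
  move=> a y z; apply: (uniq (a *: y + z)); first exact: hP.
  have -> : a *: y + z - (a * h y + h z) *: x = a *: (y - h y *: x) + (z - h z *: x).
    by rewrite scalerDl -scalerA scalerBr addrACA opprD.
  by case: sA => _; apply; apply: hP.
exists (mkscal hl); split.
  move=> y Wy; rewrite mkscalE; apply: (uniq y); first exact: hP.
  by rewrite scale0r subr0; apply: WA.
rewrite mkscalE; apply: (uniq x); first exact: hP.
by rewrite scale1r subrr; case: sA.
Qed.
End Ext.

Section DS.
Variables (k : fieldType) (H : lmodType k).

Fixpoint inspan (s : seq H) (y : H) : Prop :=
  match s with [::] => y = 0 | x :: s' => exists c, inspan s' (y - c *: x) end.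

Lemma subsp_inspan s : subsp (inspan s).
Proof.
elim: s => [|x s [IH0 IHc]] /=.
  by split => // a u v -> ->; rewrite scaler0 addr0.
split; first by exists 0; rewrite scale0r subr0.
move=> a u v [c1 h1] [c2 h2]; exists (a * c1 + c2).
have -> : a *: u + v - (a * c1 + c2) *: x = a *: (u - c1 *: x) + (v - c2 *: x).
  by rewrite scalerDl -scalerA scalerBr addrACA opprD.
by apply: IHc.
Qed.

Lemma inspan_mem s x : x \in s -> inspan s x.
Proof.
elim: s => [|y s IH] //=; rewrite inE => /orP [/eqP ->|xs].
  by exists 1; rewrite scale1r subrr; case: (subsp_inspan s).
by exists 0; rewrite scale0r subr0; apply: IH.
Qed.

Lemma inspan_sum s (c : 'I_(size s) -> k) : inspan s (\sum_(i < size s) c i *: s`_i).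
Proof.
apply: (big_ind (inspan s)); first by case: (subsp_inspan s).
  by move=> u v hu hv; apply: subspD => //; apply: subsp_inspan.
move=> i _; apply: subspZ; first exact: subsp_inspan.
by apply: inspan_mem; apply: mem_nth.
Qed.

Lemma zero_lin : forall a (x y : H), (fun _ : H => 0 : k) (a *: x + y) = a * (fun _ : H => 0 : k) x + (fun _ : H => 0 : k) y.
Proof. by move=> a x y; rewrite mulr0 addr0. Qed.
Definition sc0 : {scalar H} := mkscal zero_lin.

Lemma dual_sys (s : seq H) : exists n (w : 'I_n -> H) (g : 'I_n -> {scalar H}),
  [/\ forall i, w i \in s, forall i j, g i (w j) = (i == j)%:R
    & forall y, inspan s y -> y = \sum_i g i y *: w i].
Proof.
elim: s => [|x s [n [w [g [ws gw rep]]]]].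
  by exists 0%N, (fun _ => 0), (fun _ => sc0); split => [[]|[]|y /= ->]//; rewrite big_ord0.
case: (pselect (inspan s x)) => [sx|nsx].
  exists n, w, g; split => //.
    by move=> i; rewrite inE ws orbT.
  move=> y /= [c hy]; apply: rep.
  have -> : y = (y - c *: x) + c *: x by rewrite subrK.
  apply: subspD => //; first exact: subsp_inspan.
  by apply: subspZ => //; apply: subsp_inspan.
have [h [h0 h1]] := ext_fun (subsp_inspan s) nsx.
pose w' (i : 'I_n.+1) := if unlift ord0 i is Some j then w j else x.
have gl : forall j, forall a u v, g j ((a *: u + v) - h (a *: u + v) *: x) =
      a * g j (u - h u *: x) + g j (v - h v *: x).
  move=> j a u v.
  have -> : a *: u + v - h (a *: u + v) *: x = a *: (u - h u *: x) + (v - h v *: x).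
    by rewrite (linearP h) scalerDl -scalerA scalerBr addrACA opprD.
  by rewrite linearP.
pose g' (i : 'I_n.+1) : {scalar H} :=
  if unlift ord0 i is Some j then mkscal (gl j) else h.
exists n.+1, w', g'; split.
- move=> i; rewrite /w'; case: (unliftP ord0 i) => [j _|_]; last by rewrite inE eqxx.
  by rewrite inE ws orbT.
- move=> i j; rewrite /w' /g'.
  case: (unliftP ord0 i) => [i' ->|->]; case: (unliftP ord0 j) => [j' ->|->].
  + rewrite mkscalE (h0 _ (inspan_mem (ws j'))) scale0r subr0 gw.
    by rewrite (inj_eq (@lift_inj _ ord0)).
  + by rewrite mkscalE h1 scale1r subrr linear0 eq_sym (negbTE (neq_lift _ _)).
  + by rewrite (h0 _ (inspan_mem (ws j'))) (negbTE (neq_lift _ _)).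
  + by rewrite h1 eqxx.
- move=> y /= [c hy].
  rewrite big_ord_recl /w' /g' unlift_none.
  under eq_bigr => i _ do rewrite liftK mkscalE.
  have hyc : h y = c.
    have := h0 _ hy; rewrite linearB linearZ /= h1 mulr1 => /eqP.
    by rewrite subr_eq0 => /eqP.
  have sy : inspan s (y - h y *: x) by rewrite hyc.
  by rewrite -(rep _ sy) addrC subrK.
Qed.
End DS.

End ProofAux.
Import ProofAux.
Set Implicit Arguments. Unset Strict Implicit. Unset Printing Implicit Defensive.

Section Tens.
Variables (k : fieldType) (H : algType k).

Definition lin (L : H -> k) := forall a x y, L (a *: x + y) = a * L x + L y.
Lemma linS (f : {scalar H}) : lin f. Proof. by move=> a x y; rewrite linearP. Qed.

Lemma lmul_lin (f : {scalar H}) (a : H) : lin (fun y => f (a * y)).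
Proof. by move=> c x y; rewrite mulrDr -scalerAr linearP. Qed.
Definition lmul f a := mkscal (lmul_lin f a).
Arguments lmul : simpl never.
Lemma lmulE f a y : lmul f a y = f (a * y). Proof. by []. Qed.
Lemma rmul_lin (f : {scalar H}) (a : H) : lin (fun y => f (y * a)).
Proof. by move=> c x y; rewrite mulrDl -scalerAl linearP. Qed.
Definition rmul f a := mkscal (rmul_lin f a).
Arguments rmul : simpl never.
Lemma rmulE f a y : rmul f a y = f (y * a). Proof. by []. Qed.

Lemma teq2_refl (t : tens2 H) : teq2 t t. Proof. by []. Qed.
Lemma teq2_sym (t u : tens2 H) : teq2 t u -> teq2 u t. Proof. by move=> h f g; rewrite h. Qed.
Lemma teq2_trans (t u v : tens2 H) : teq2 t u -> teq2 u v -> teq2 t v.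
Proof. by move=> h1 h2 f g; rewrite h1 h2. Qed.
Lemma teq3_refl (t : tens3 H) : teq3 t t. Proof. by []. Qed.
Lemma teq3_sym (t u : tens3 H) : teq3 t u -> teq3 u t. Proof. by move=> h f g l; rewrite h. Qed.
Lemma teq3_trans (t u v : tens3 H) : teq3 t u -> teq3 u v -> teq3 t v.
Proof. by move=> h1 h2 f g l; rewrite h1 h2. Qed.
Lemma teq4_refl (t : tens4 H) : teq4 t t. Proof. by []. Qed.
Lemma teq4_sym (t u : tens4 H) : teq4 t u -> teq4 u t. Proof. by move=> h f g l m; rewrite h. Qed.
Lemma teq4_trans (t u v : tens4 H) : teq4 t u -> teq4 u v -> teq4 t v.
Proof. by move=> h1 h2 f g l m; rewrite h1 h2. Qed.

Lemma ev2_mul (t u : tens2 H) (f g : {scalar H}) :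
  \sum_(p <- mul2 t u) f p.1 * g p.2 =
  \sum_(p <- t) \sum_(q <- u) f (p.1 * q.1) * g (p.2 * q.2).
Proof. by rewrite big_allpairs_dep. Qed.
Lemma ev3_mul (t u : tens3 H) (f g h : {scalar H}) :
  \sum_(p <- mul3 t u) f p.1.1 * g p.1.2 * h p.2 =
  \sum_(p <- t) \sum_(q <- u) f (p.1.1 * q.1.1) * g (p.1.2 * q.1.2) * h (p.2 * q.2).
Proof. by rewrite big_allpairs_dep. Qed.
Lemma ev4_mul (t u : tens4 H) (f g h l : {scalar H}) :
  \sum_(p <- mul4 t u) f p.1.1.1 * g p.1.1.2 * h p.1.2 * l p.2 =
  \sum_(p <- t) \sum_(q <- u) f (p.1.1.1 * q.1.1.1) * g (p.1.1.2 * q.1.1.2)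
     * h (p.1.2 * q.1.2) * l (p.2 * q.2).
Proof. by rewrite big_allpairs_dep. Qed.

Lemma mul2_cong (t t' u u' : tens2 H) : teq2 t t' -> teq2 u u' -> teq2 (mul2 t u) (mul2 t' u').
Proof.
move=> ht hu f g; rewrite !ev2_mul.
transitivity (\sum_(p <- t) \sum_(q <- u') f (p.1 * q.1) * g (p.2 * q.2)).
  by apply: eq_bigr => p _; exact: (hu (lmul f p.1) (lmul g p.2)).
rewrite exchange_big [RHS]exchange_big /=; apply: eq_bigr => q _.
exact: (ht (rmul f q.1) (rmul g q.2)).
Qed.
Lemma mul3_cong (t t' u u' : tens3 H) : teq3 t t' -> teq3 u u' -> teq3 (mul3 t u) (mul3 t' u').
Proof.
move=> ht hu f g h; rewrite !ev3_mul.
transitivity (\sum_(p <- t) \sum_(q <- u') f (p.1.1 * q.1.1) * g (p.1.2 * q.1.2) * h (p.2 * q.2)).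
  by apply: eq_bigr => p _; exact: (hu (lmul f p.1.1) (lmul g p.1.2) (lmul h p.2)).
rewrite exchange_big [RHS]exchange_big /=; apply: eq_bigr => q _.
exact: (ht (rmul f q.1.1) (rmul g q.1.2) (rmul h q.2)).
Qed.
Lemma mul4_cong (t t' u u' : tens4 H) : teq4 t t' -> teq4 u u' -> teq4 (mul4 t u) (mul4 t' u').
Proof.
move=> ht hu f g h l; rewrite !ev4_mul.
transitivity (\sum_(p <- t) \sum_(q <- u') f (p.1.1.1 * q.1.1.1) * g (p.1.1.2 * q.1.1.2)
     * h (p.1.2 * q.1.2) * l (p.2 * q.2)).
  by apply: eq_bigr => p _; exact: (hu (lmul f p.1.1.1) (lmul g p.1.1.2) (lmul h p.1.2) (lmul l p.2)).
rewrite exchange_big [RHS]exchange_big /=; apply: eq_bigr => q _.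
exact: (ht (rmul f q.1.1.1) (rmul g q.1.1.2) (rmul h q.1.2) (rmul l q.2)).
Qed.

Lemma mul3A (t u v : tens3 H) : teq3 (mul3 (mul3 t u) v) (mul3 t (mul3 u v)).
Proof.
move=> f g h; rewrite /mul3 !big_allpairs_dep /=; apply: eq_bigr => p _.
rewrite big_allpairs_dep /=; apply: eq_bigr => q _; apply: eq_bigr => r _.
by rewrite !mulrA.
Qed.
Lemma mul4A (t u v : tens4 H) : teq4 (mul4 (mul4 t u) v) (mul4 t (mul4 u v)).
Proof.
move=> f g h l; rewrite /mul4 !big_allpairs_dep /=; apply: eq_bigr => p _.
rewrite big_allpairs_dep /=; apply: eq_bigr => q _; apply: eq_bigr => r _.
by rewrite !mulrA.
Qed.
Definition one4 : tens4 H := [:: (1, 1, 1, 1)].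
Lemma mul3_1l (t : tens3 H) : teq3 (mul3 (@one3 k H) t) t.
Proof. by move=> f g h; rewrite ev3_mul big_seq1; apply: eq_bigr => p _; rewrite !mul1r. Qed.
Lemma mul3_1r (t : tens3 H) : teq3 (mul3 t (@one3 k H)) t.
Proof. by move=> f g h; rewrite ev3_mul; apply: eq_bigr => p _; rewrite big_seq1 !mulr1. Qed.
Lemma mul4_1l (t : tens4 H) : teq4 (mul4 one4 t) t.
Proof. by move=> f g h l; rewrite ev4_mul big_seq1; apply: eq_bigr => p _; rewrite !mul1r. Qed.
Lemma mul4_1r (t : tens4 H) : teq4 (mul4 t one4) t.
Proof. by move=> f g h l; rewrite ev4_mul; apply: eq_bigr => p _; rewrite big_seq1 !mulr1. Qed.


#[global] Instance teq2_Equiv : Equivalence (@teq2 k H).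
Proof. split; [exact: teq2_refl|exact: teq2_sym|exact: teq2_trans]. Qed.
#[global] Instance teq3_Equiv : Equivalence (@teq3 k H).
Proof. split; [exact: teq3_refl|exact: teq3_sym|exact: teq3_trans]. Qed.
#[global] Instance teq4_Equiv : Equivalence (@teq4 k H).
Proof. split; [exact: teq4_refl|exact: teq4_sym|exact: teq4_trans]. Qed.
#[global] Instance mul2_Proper : Proper (@teq2 k H ==> @teq2 k H ==> @teq2 k H) (@mul2 k H).
Proof. by move=> ? ? h1 ? ? h2; apply: mul2_cong. Qed.
#[global] Instance mul3_Proper : Proper (@teq3 k H ==> @teq3 k H ==> @teq3 k H) (@mul3 k H).
Proof. by move=> ? ? h1 ? ? h2; apply: mul3_cong. Qed.
#[global] Instance mul4_Proper : Proper (@teq4 k H ==> @teq4 k H ==> @teq4 k H) (@mul4 k H).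
Proof. by move=> ? ? h1 ? ? h2; apply: mul4_cong. Qed.

Section Delta.
Variables (Delta : H -> tens2 H) (eps : H -> k) (phi phiinv : tens3 H).
Hypothesis QB : quasibialgebra Delta eps phi phiinv.

Lemma Dsc_lin (h l : {scalar H}) : lin (fun y => \sum_(q <- Delta y) h q.1 * l q.2).
Proof.
move=> a x y; rewrite (Delta_linear QB a x y) big_cat big_map /= mulr_sumr.
by congr (_ + _); apply: eq_bigr => q _; rewrite linearZ /= mulrA.
Qed.
Definition Dsc h l := mkscal (Dsc_lin h l).
Arguments Dsc : simpl never.
Lemma DscE (h l : {scalar H}) y : Dsc h l y = \sum_(q <- Delta y) h q.1 * l q.2. Proof. by []. Qed.

Definition L1 (t : tens3 H) : tens4 H := [seq (1, p.1.1, p.1.2, p.2) | p <- t].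
Definition R1 (t : tens3 H) : tens4 H := [seq (p.1.1, p.1.2, p.2, 1) | p <- t].
Definition HHD (t : tens3 H) : tens4 H := [seq (p.1.1, p.1.2, q.1, q.2) | p <- t, q <- Delta p.2].
Definition DHH (t : tens3 H) : tens4 H := [seq (q.1, q.2, p.1.2, p.2) | p <- t, q <- Delta p.1.1].
Definition HDH (t : tens3 H) : tens4 H := [seq (p.1.1, q.1, q.2, p.2) | p <- t, q <- Delta p.1.2].

Lemma L1_cong t u : teq3 t u -> teq4 (L1 t) (L1 u).
Proof.
move=> h f g l m; rewrite !big_map /=.
under eq_bigr do rewrite -!mulrA; under [RHS]eq_bigr do rewrite -!mulrA.
rewrite -!mulr_sumr; congr (_ * _).
under eq_bigr do rewrite !mulrA; under [RHS]eq_bigr do rewrite !mulrA.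
exact: h.
Qed.
Lemma R1_cong t u : teq3 t u -> teq4 (R1 t) (R1 u).
Proof. by move=> h f g l m; rewrite !big_map /= -!mulr_suml h. Qed.
Lemma L1_mul t u : teq4 (L1 (mul3 t u)) (mul4 (L1 t) (L1 u)).
Proof.
move=> f g h l; rewrite big_map /mul3 big_allpairs_dep ev4_mul big_map.
by apply: eq_bigr => p _; rewrite big_map; apply: eq_bigr => q _ /=; rewrite mulr1.
Qed.
Lemma R1_mul t u : teq4 (R1 (mul3 t u)) (mul4 (R1 t) (R1 u)).
Proof.
move=> f g h l; rewrite big_map /mul3 big_allpairs_dep ev4_mul big_map.
by apply: eq_bigr => p _; rewrite big_map; apply: eq_bigr => q _ /=; rewrite mulr1.
Qed.
Lemma L1_one : teq4 (L1 (one3 H)) one4.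
Proof. by move=> f g h l; rewrite big_map. Qed.
Lemma R1_one : teq4 (R1 (one3 H)) one4.
Proof. by move=> f g h l; rewrite big_map. Qed.

Lemma ev_HHD t (f g h l : {scalar H}) : \sum_(p <- HHD t) f p.1.1.1 * g p.1.1.2 * h p.1.2 * l p.2 =
   \sum_(p <- t) f p.1.1 * g p.1.2 * Dsc h l p.2.
Proof.
rewrite big_allpairs_dep; apply: eq_bigr => p _ /=; rewrite DscE mulr_sumr.
by apply: eq_bigr => q _; rewrite !mulrA.
Qed.
Lemma ev_DHH t (f g h l : {scalar H}) : \sum_(p <- DHH t) f p.1.1.1 * g p.1.1.2 * h p.1.2 * l p.2 =
   \sum_(p <- t) Dsc f g p.1.1 * h p.1.2 * l p.2.
Proof.
rewrite big_allpairs_dep; apply: eq_bigr => p _ /=; rewrite DscE !mulr_suml.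
by apply: eq_bigr => q _.
Qed.
Lemma ev_HDH t (f g h l : {scalar H}) : \sum_(p <- HDH t) f p.1.1.1 * g p.1.1.2 * h p.1.2 * l p.2 =
   \sum_(p <- t) f p.1.1 * Dsc g h p.1.2 * l p.2.
Proof.
rewrite big_allpairs_dep; apply: eq_bigr => p _ /=; rewrite DscE mulr_sumr !mulr_suml.
by apply: eq_bigr => q _; rewrite !mulrA.
Qed.
Lemma HHD_cong t u : teq3 t u -> teq4 (HHD t) (HHD u).
Proof. by move=> h f g l m; rewrite !ev_HHD h. Qed.
Lemma DHH_cong t u : teq3 t u -> teq4 (DHH t) (DHH u).
Proof. by move=> h f g l m; rewrite !ev_DHH h. Qed.
Lemma HDH_cong t u : teq3 t u -> teq4 (HDH t) (HDH u).
Proof. by move=> h f g l m; rewrite !ev_HDH h. Qed.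

Lemma Dsc_mul (h l : {scalar H}) x y : Dsc h l (x * y) =
  \sum_(q <- Delta x) \sum_(r <- Delta y) h (q.1 * r.1) * l (q.2 * r.2).
Proof. by rewrite DscE (Delta_mul QB) ev2_mul. Qed.
Lemma Dsc_one (h l : {scalar H}) : Dsc h l 1 = h 1 * l 1.
Proof. by rewrite DscE (Delta_one QB) big_seq1. Qed.

Lemma HHD_mul t u : teq4 (HHD (mul3 t u)) (mul4 (HHD t) (HHD u)).
Proof.
move=> f g h l; rewrite ev_HHD /mul3 big_allpairs_dep ev4_mul /HHD big_allpairs_dep.
apply: eq_bigr => p _; rewrite exchange_big big_allpairs_dep.
apply: eq_bigr => q _; rewrite Dsc_mul [RHS]exchange_big /= mulr_sumr; apply: eq_bigr => r _.
by rewrite mulr_sumr; apply: eq_bigr => s _; rewrite !mulrA.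
Qed.
Lemma DHH_mul t u : teq4 (DHH (mul3 t u)) (mul4 (DHH t) (DHH u)).
Proof.
move=> f g h l; rewrite ev_DHH /mul3 big_allpairs_dep ev4_mul /DHH big_allpairs_dep.
apply: eq_bigr => p _; rewrite exchange_big big_allpairs_dep.
apply: eq_bigr => q _; rewrite Dsc_mul [RHS]exchange_big /= !mulr_suml; apply: eq_bigr => r _.
by rewrite !mulr_suml; apply: eq_bigr => s _.
Qed.
Lemma HDH_mul t u : teq4 (HDH (mul3 t u)) (mul4 (HDH t) (HDH u)).
Proof.
move=> f g h l; rewrite ev_HDH /mul3 big_allpairs_dep ev4_mul /HDH big_allpairs_dep.
apply: eq_bigr => p _; rewrite exchange_big big_allpairs_dep.
apply: eq_bigr => q _; rewrite Dsc_mul [RHS]exchange_big /= mulr_sumr !mulr_suml; apply: eq_bigr => r _.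
by rewrite mulr_sumr mulr_suml; apply: eq_bigr => s _; rewrite !mulrA.
Qed.
Lemma HHD_one : teq4 (HHD (one3 H)) one4.
Proof. by move=> f g h l; rewrite ev_HHD !big_seq1 Dsc_one /= !mulrA. Qed.
Lemma DHH_one : teq4 (DHH (one3 H)) one4.
Proof. by move=> f g h l; rewrite ev_DHH !big_seq1 Dsc_one. Qed.
Lemma HDH_one : teq4 (HDH (one3 H)) one4.
Proof. by move=> f g h l; rewrite ev_HDH !big_seq1 Dsc_one /= !mulrA. Qed.

#[global] Instance L1_Proper : Proper (@teq3 k H ==> @teq4 k H) L1.
Proof. by move=> ? ? h; apply: L1_cong. Qed.
#[global] Instance R1_Proper : Proper (@teq3 k H ==> @teq4 k H) R1.
Proof. by move=> ? ? h; apply: R1_cong. Qed.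
#[global] Instance HHD_Proper : Proper (@teq3 k H ==> @teq4 k H) HHD.
Proof. by move=> ? ? h; apply: HHD_cong. Qed.
#[global] Instance DHH_Proper : Proper (@teq3 k H ==> @teq4 k H) DHH.
Proof. by move=> ? ? h; apply: DHH_cong. Qed.
#[global] Instance HDH_Proper : Proper (@teq3 k H ==> @teq4 k H) HDH.
Proof. by move=> ? ? h; apply: HDH_cong. Qed.
End Delta.
End Tens.

Section Tr.
Variables (k : fieldType) (H : algType k).

Lemma lin_expand n (w : 'I_n -> H) (g : 'I_n -> {scalar H}) (L : H -> k) y :
  lin L -> y = \sum_i g i y *: w i -> L y = \sum_i g i y * L (w i).
Proof.
move=> hL ey; have -> : L y = mkscal hL y by [].
by rewrite {1}ey linear_sum; apply: eq_bigr => i _; rewrite linearZ.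
Qed.

Section Exp.
Variables (n : nat) (w : 'I_n -> H) (g : 'I_n -> {scalar H}).
Variable P : H -> Prop.
Hypothesis rep : forall y, P y -> y = \sum_i g i y *: w i.

Lemma expand_sum2 (v : tens2 H) (F : H -> H -> k) :
  (forall b, lin (F^~ b)) -> (forall a, lin (F a)) ->
  (forall p, p \in v -> P p.1 /\ P p.2) ->
  \sum_(p <- v) F p.1 p.2 =
  \sum_i \sum_j (\sum_(p <- v) g i p.1 * g j p.2) * F (w i) (w j).
Proof.
move=> l1 l2 hv.
rewrite (eq_big_seq (fun p => \sum_i \sum_j g i p.1 * g j p.2 * F (w i) (w j))); last first.
  move=> p /hv [h1 h2]; rewrite (lin_expand (l1 _) (rep h1)); apply: eq_bigr => i _.
  rewrite (lin_expand (l2 _) (rep h2)) mulr_sumr; apply: eq_bigr => j _.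
  by rewrite mulrA.
rewrite exchange_big; apply: eq_bigr => i _; rewrite exchange_big; apply: eq_bigr => j _.
by rewrite mulr_suml.
Qed.

Lemma expand_sum4 (v : tens4 H) (F : H -> H -> H -> H -> k) :
  (forall b c d, lin (fun a => F a b c d)) -> (forall a c d, lin (fun b => F a b c d)) ->
  (forall a b d, lin (fun c => F a b c d)) -> (forall a b c, lin (F a b c)) ->
  (forall p, p \in v -> [/\ P p.1.1.1, P p.1.1.2, P p.1.2 & P p.2]) ->
  \sum_(p <- v) F p.1.1.1 p.1.1.2 p.1.2 p.2 =
  \sum_i \sum_j \sum_l \sum_m
    (\sum_(p <- v) g i p.1.1.1 * g j p.1.1.2 * g l p.1.2 * g m p.2) * F (w i) (w j) (w l) (w m).
Proof.
move=> l1 l2 l3 l4 hv.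
rewrite (eq_big_seq (fun p => \sum_i \sum_j \sum_l \sum_m
   g i p.1.1.1 * g j p.1.1.2 * g l p.1.2 * g m p.2 * F (w i) (w j) (w l) (w m))); last first.
  move=> p /hv [h1 h2 h3 h4]; rewrite (lin_expand (l1 _ _ _) (rep h1)); apply: eq_bigr => i _.
  rewrite (lin_expand (l2 _ _ _) (rep h2)) mulr_sumr; apply: eq_bigr => j _.
  rewrite (lin_expand (l3 _ _ _) (rep h3)) !mulr_sumr; apply: eq_bigr => l _.
  rewrite (lin_expand (l4 _ _ _) (rep h4)) !mulr_sumr; apply: eq_bigr => m _.
  by rewrite !mulrA.
rewrite exchange_big; apply: eq_bigr => i _; rewrite exchange_big; apply: eq_bigr => j _.
rewrite exchange_big; apply: eq_bigr => l _; rewrite exchange_big; apply: eq_bigr => m _.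
by rewrite mulr_suml.
Qed.
End Exp.

Lemma transport2 (t u : tens2 H) (F : H -> H -> k) :
  (forall b, lin (F^~ b)) -> (forall a, lin (F a)) -> teq2 t u ->
  \sum_(p <- t) F p.1 p.2 = \sum_(p <- u) F p.1 p.2.
Proof.
move=> l1 l2 htu.
have [n [w [g [_ _ rep]]]] := dual_sys ([seq p.1 | p <- t ++ u] ++ [seq p.2 | p <- t ++ u]).
have hv : forall v : seq _, {subset v <= t ++ u} -> forall p, p \in v ->
   inspan ([seq p.1 | p <- t ++ u] ++ [seq p.2 | p <- t ++ u]) p.1 /\
   inspan ([seq p.1 | p <- t ++ u] ++ [seq p.2 | p <- t ++ u]) p.2.
  move=> v sv p pv; split; apply: inspan_mem; rewrite mem_cat.
    by rewrite (map_f (fun p : H * H => p.1) (sv _ pv)).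
  by rewrite (map_f (fun p : H * H => p.2) (sv _ pv)) orbT.
rewrite (expand_sum2 rep l1 l2 (hv t _)); last by move=> p pt; rewrite mem_cat pt.
rewrite (expand_sum2 rep l1 l2 (hv u _)); last by move=> p pt; rewrite mem_cat pt orbT.
by apply: eq_bigr => i _; apply: eq_bigr => j _; rewrite htu.
Qed.

Lemma transport4 (t u : tens4 H) (F : H -> H -> H -> H -> k) :
  (forall b c d, lin (fun a => F a b c d)) -> (forall a c d, lin (fun b => F a b c d)) ->
  (forall a b d, lin (fun c => F a b c d)) -> (forall a b c, lin (F a b c)) ->
  teq4 t u ->
  \sum_(p <- t) F p.1.1.1 p.1.1.2 p.1.2 p.2 = \sum_(p <- u) F p.1.1.1 p.1.1.2 p.1.2 p.2.
Proof.
move=> l1 l2 l3 l4 htu.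
pose s := [seq p.1.1.1 | p <- t ++ u] ++ [seq p.1.1.2 | p <- t ++ u] ++
          [seq p.1.2 | p <- t ++ u] ++ [seq p.2 | p <- t ++ u].
have [n [w [g [_ _ rep]]]] := dual_sys s.
have hv : forall v : seq _, {subset v <= t ++ u} -> forall p, p \in v ->
   [/\ inspan s p.1.1.1, inspan s p.1.1.2, inspan s p.1.2 & inspan s p.2].
  move=> v sv p pv; have tp := sv _ pv.
  split; apply: inspan_mem; rewrite !mem_cat.
  - by rewrite (map_f (fun q : H * H * H * H => q.1.1.1) tp).
  - by rewrite (map_f (fun q : H * H * H * H => q.1.1.2) tp) orbT.
  - by rewrite (map_f (fun q : H * H * H * H => q.1.2) tp) !orbT.
  - by rewrite (map_f (fun q : H * H * H * H => q.2) tp) !orbT.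
rewrite (expand_sum4 rep l1 l2 l3 l4 (hv t _)); last by move=> p pt; rewrite mem_cat pt.
rewrite (expand_sum4 rep l1 l2 l3 l4 (hv u _)); last by move=> p pt; rewrite mem_cat pt orbT.
apply: eq_bigr => i _; apply: eq_bigr => j _; apply: eq_bigr => l _; apply: eq_bigr => m _.
by congr (_ * _); exact: htu.
Qed.

Lemma sep (x y : H) : (forall f : {scalar H}, f x = f y) -> x = y.
Proof.
move=> h; have [n [w [g [_ _ rep]]]] := dual_sys [:: x; y].
have ex : inspan [:: x; y] x by apply: inspan_mem; rewrite !inE eqxx.
have ey : inspan [:: x; y] y by apply: inspan_mem; rewrite !inE eqxx orbT.
have -> := rep _ ex; have -> := rep _ ey.
by apply: eq_bigr => i _; rewrite h.
Qed.
End Tr.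

Section QH.
Variables (k : fieldType) (H : algType k).
Variables (Delta : H -> tens2 H) (eps : H -> k) (phi phiinv : tens3 H).
Variables (S : H -> H) (alpha beta : H).
Hypothesis QB : quasibialgebra Delta eps phi phiinv.
Hypothesis QA : quasi_antipode Delta eps phi phiinv S alpha beta.

Lemma S0 : S 0 = 0.
Proof.
have := S_linear QA 1 0 0; rewrite !scale1r addr0 => h.
by apply: (addrI (S 0)); rewrite -h addr0.
Qed.
Lemma SD x y : S (x + y) = S x + S y.
Proof. by have := S_linear QA 1 x y; rewrite !scale1r. Qed.
Lemma SZ a x : S (a *: x) = a *: S x.
Proof. by have := S_linear QA a x 0; rewrite !addr0 S0 addr0. Qed.
Lemma SP a x y : S (a *: x + y) = a *: S x + S y. Proof. by have := S_linear QA a x y. Qed.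
Lemma SM x y : S (x * y) = S y * S x. Proof. by have := S_antimul QA x y. Qed.
Lemma S1 : S 1 = 1. Proof. by have := S_one QA. Qed.
Lemma S_sum (I : Type) (r : seq I) (F : I -> H) : S (\sum_(i <- r) F i) = \sum_(i <- r) S (F i).
Proof. by apply: (big_morph S SD S0). Qed.

Lemma eps_linear' a x : eps (a *: x) = a * eps x.
Proof.
have := eps_linear QB a x 0; rewrite !addr0.
have e0 : eps 0 = 0.
  have := eps_linear QB 1 0 0; rewrite scale1r addr0 mul1r => h.
  by apply: (addrI (eps 0)); rewrite -h addr0.
by rewrite e0 addr0.
Qed.

Definition epsc : {scalar H} := mkscal (eps_linear QB).
Arguments epsc : simpl never.
Lemma epscE x : epsc x = eps x. Proof. by []. Qed.

Definition C2 (t : tens4 H) : tens3 H := [seq (p.1.1.1, eps p.1.1.2 *: p.1.2, p.2) | p <- t].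
Definition C3 (t : tens4 H) : tens3 H := [seq (p.1.1.1, p.1.1.2, eps p.1.2 *: p.2) | p <- t].
Lemma ev_C2 t (f h l : {scalar H}) :
  \sum_(p <- C2 t) f p.1.1 * h p.1.2 * l p.2 =
  \sum_(p <- t) f p.1.1.1 * epsc p.1.1.2 * h p.1.2 * l p.2.
Proof. by rewrite big_map; apply: eq_bigr => p _ /=; rewrite linearZ /= mulrA. Qed.
Lemma ev_C3 t (f g l : {scalar H}) :
  \sum_(p <- C3 t) f p.1.1 * g p.1.2 * l p.2 =
  \sum_(p <- t) f p.1.1.1 * g p.1.1.2 * epsc p.1.2 * l p.2.
Proof. by rewrite big_map; apply: eq_bigr => p _ /=; rewrite linearZ /= mulrA. Qed.
Lemma C2_cong t u : teq4 t u -> teq3 (C2 t) (C2 u).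
Proof. by move=> h f g l; rewrite !ev_C2 h. Qed.
Lemma C3_cong t u : teq4 t u -> teq3 (C3 t) (C3 u).
Proof. by move=> h f g l; rewrite !ev_C3 h. Qed.
Lemma C2_mul t u : teq3 (C2 (mul4 t u)) (mul3 (C2 t) (C2 u)).
Proof.
move=> f h l; rewrite ev_C2 ev4_mul ev3_mul /C2 big_map; apply: eq_bigr => p _.
rewrite big_map; apply: eq_bigr => q _ /=.
by rewrite !epscE (eps_mul QB) -scalerAl -scalerAr scalerA linearZ /= !mulrA.
Qed.
Lemma C3_mul t u : teq3 (C3 (mul4 t u)) (mul3 (C3 t) (C3 u)).
Proof.
move=> f h l; rewrite ev_C3 ev4_mul ev3_mul /C3 big_map; apply: eq_bigr => p _.
rewrite big_map; apply: eq_bigr => q _ /=.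
by rewrite !epscE (eps_mul QB) -scalerAl -scalerAr scalerA linearZ /= !mulrA.
Qed.


Lemma phi_normal' (f g : {scalar H}) :
  \sum_(p <- phi) f p.1.1 * epsc p.1.2 * g p.2 = f 1 * g 1.
Proof.
have h := phi_normal QB f g; rewrite big_map /one2 big_seq1 /= in h; rewrite -h.
by apply: eq_bigr => p _; rewrite linearZ /= epscE mulrA.
Qed.

Lemma norm_phiinv_mid : teq2 [seq (p.1.1, eps p.1.2 *: p.2) | p <- phiinv] (one2 H).
Proof.
move=> f g; rewrite big_map /one2 big_seq1 /=.
have := phi_inv_l QB f epsc g; rewrite ev3_mul /one3 big_seq1 /= epscE (eps_one QB) mulr1 => <-.
apply: eq_bigr => x _.
transitivity (eps x.1.2 * \sum_(X <- phi) lmul f x.1.1 X.1.1 * epsc X.1.2 * lmul g x.2 X.2).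
  by rewrite phi_normal' !lmulE !mulr1 linearZ /= mulrCA mulrA.
rewrite mulr_sumr; apply: eq_bigr => X _; rewrite !lmulE !epscE (eps_mul QB).
by ring.
Qed.


#[local] Instance HHD_P : Proper (@teq3 k H ==> @teq4 k H) (HHD Delta) := HHD_Proper QB.
#[local] Instance DHH_P : Proper (@teq3 k H ==> @teq4 k H) (DHH Delta) := DHH_Proper QB.
#[local] Instance HDH_P : Proper (@teq3 k H ==> @teq4 k H) (HDH Delta) := HDH_Proper QB.
#[local] Instance C2_P : Proper (@teq4 k H ==> @teq3 k H) C2.
Proof. by move=> ? ? h; apply: C2_cong. Qed.
#[local] Instance C3_P : Proper (@teq4 k H ==> @teq3 k H) C3.
Proof. by move=> ? ? h; apply: C3_cong. Qed.

Lemma counit_l' (f : {scalar H}) x : \sum_(q <- Delta x) eps q.1 * f q.2 = f x.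
Proof.
rewrite -{2}(counit_l QB x) linear_sum; apply: eq_bigr => q _; by rewrite linearZ.
Qed.
Lemma counit_r' (f : {scalar H}) x : \sum_(q <- Delta x) f q.1 * eps q.2 = f x.
Proof.
rewrite -{2}(counit_r QB x) linear_sum; apply: eq_bigr => q _; by rewrite linearZ /= mulrC.
Qed.

Definition E1 : tens3 H := [seq (1, eps p.1.1 *: p.1.2, p.2) | p <- phi].

Lemma C2_HHD : teq3 (C2 (HHD Delta phi)) (one3 H).
Proof.
move=> f g h; rewrite ev_C2 (ev_HHD QB) /one3 big_seq1.
by rewrite phi_normal' (Dsc_one QB) mulrA.
Qed.
Lemma C2_DHH : teq3 (C2 (DHH Delta phi)) phi.
Proof.
move=> f g h; rewrite ev_C2 (ev_DHH QB) //; apply: eq_bigr => p _.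
by rewrite (DscE QB) counit_r'.
Qed.
Lemma C2_HDH : teq3 (C2 (HDH Delta phi)) phi.
Proof.
move=> f g h; rewrite ev_C2 (ev_HDH QB) //; apply: eq_bigr => p _.
by rewrite (DscE QB) counit_l'.
Qed.
Lemma C2_L1 : teq3 (C2 (L1 phi)) E1.
Proof. by move=> f g h; rewrite /C2 /L1 /E1 -map_comp. Qed.
Lemma C2_R1 : teq3 (C2 (R1 phi)) (one3 H).
Proof.
move=> f g h; rewrite ev_C2 /R1 big_map /one3 big_seq1 /=.
rewrite -mulr_suml; exact: (congr1 (fun x => x * h 1) (phi_normal' f g)).
Qed.

Lemma teq_phi_E1phi : teq3 phi (mul3 E1 phi).
Proof.
have P : teq4 (mul4 (HHD Delta phi) (DHH Delta phi))
              (mul4 (mul4 (L1 phi) (HDH Delta phi)) (R1 phi)) := pentagon QB.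
transitivity (mul3 (C2 (HHD Delta phi)) (C2 (DHH Delta phi))).
  by rewrite C2_HHD C2_DHH mul3_1l.
by rewrite -C2_mul P !C2_mul C2_L1 C2_HDH C2_R1 mul3_1r.
Qed.

Lemma E1_one : teq3 E1 (one3 H).
Proof.
transitivity (mul3 E1 (mul3 phi phiinv)); first by rewrite (phi_inv_r QB) mul3_1r.
by rewrite -mul3A -teq_phi_E1phi (phi_inv_r QB).
Qed.

Lemma norm_phi_left : teq2 [seq (eps p.1.1 *: p.1.2, p.2) | p <- phi] (one2 H).
Proof.
move=> f g; have h := E1_one epsc f g.
have h' : \sum_(j <- phi) eps 1 * f (eps j.1.1 *: j.1.2) * g j.2 = eps 1 * f 1 * g 1.
  by move: h; rewrite /E1 big_map /one3 big_seq1 => h; exact h.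
rewrite big_map /one2 big_seq1 /=.
transitivity (eps 1 * f 1 * g 1); last by rewrite (eps_one QB) mul1r.
by rewrite -h'; apply: eq_bigr => p _; rewrite (eps_one QB) mul1r.
Qed.

Definition E3 : tens3 H := [seq (p.1.1, p.1.2, eps p.2 *: 1) | p <- phi].
Lemma C3_HHD : teq3 (C3 (HHD Delta phi)) phi.
Proof.
move=> f g h; rewrite ev_C3 (ev_HHD QB); apply: eq_bigr => p _.
by rewrite (DscE QB) counit_l'.
Qed.
Lemma C3_DHH : teq3 (C3 (DHH Delta phi)) (one3 H).
Proof.
move=> f g h; rewrite ev_C3 (ev_DHH QB) /one3 big_seq1.
by rewrite phi_normal' (Dsc_one QB).
Qed.
Lemma C3_L1 : teq3 (C3 (L1 phi)) (one3 H).
Proof.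
move=> f g h; rewrite ev_C3 /L1 big_map /one3 big_seq1 /= -mulrA -(phi_normal' g h) mulr_sumr.
by apply: eq_bigr => p _; rewrite !mulrA.
Qed.
Lemma C3_HDH : teq3 (C3 (HDH Delta phi)) phi.
Proof.
move=> f g h; rewrite ev_C3 (ev_HDH QB); apply: eq_bigr => p _.
by rewrite (DscE QB) counit_r'.
Qed.
Lemma C3_R1 : teq3 (C3 (R1 phi)) E3.
Proof. by move=> f g h; rewrite /C3 /R1 /E3 -map_comp. Qed.

Lemma teq_phi_phiE3 : teq3 phi (mul3 phi E3).
Proof.
have P : teq4 (mul4 (HHD Delta phi) (DHH Delta phi))
              (mul4 (mul4 (L1 phi) (HDH Delta phi)) (R1 phi)) := pentagon QB.
transitivity (mul3 (C3 (HHD Delta phi)) (C3 (DHH Delta phi))).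
  by rewrite C3_HHD C3_DHH mul3_1r.
by rewrite -C3_mul P !C3_mul C3_L1 C3_HDH C3_R1 mul3_1l.
Qed.
Lemma E3_one : teq3 E3 (one3 H).
Proof.
transitivity (mul3 (mul3 phiinv phi) E3); first by rewrite (phi_inv_l QB) mul3_1l.
by rewrite mul3A -teq_phi_phiE3 (phi_inv_l QB).
Qed.
Lemma norm_phi_right : teq2 [seq (p.1.1, eps p.2 *: p.1.2) | p <- phi] (one2 H).
Proof.
move=> f g; have h := E3_one f g epsc.
have h' : \sum_(j <- phi) f j.1.1 * g j.1.2 * eps (eps j.2 *: 1) = f 1 * g 1 * eps 1.
  by move: h; rewrite /E3 big_map /one3 big_seq1 => h; exact h.
rewrite big_map /one2 big_seq1 /=.
transitivity (f 1 * g 1 * eps 1); last by rewrite (eps_one QB) mulr1.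
rewrite -h'; apply: eq_bigr => p _; rewrite linearZ /= eps_linear' (eps_one QB); ring.
Qed.
Lemma norm_phiinv_right : teq2 [seq (p.1.1, eps p.2 *: p.1.2) | p <- phiinv] (one2 H).
Proof.
move=> f g; have h := phi_inv_r QB f g epsc.
rewrite ev3_mul /one3 big_seq1 epscE (eps_one QB) mulr1 in h.
rewrite big_map /one2 big_seq1 -h exchange_big; apply: eq_bigr => x _ /=.
have := norm_phi_right (rmul f x.1.1) (rmul g x.1.2).
rewrite big_map /one2 big_seq1 !rmulE !mul1r => e.
transitivity (eps x.2 * (f x.1.1 * g x.1.2)); first by rewrite linearZ /=; ring.
rewrite -e mulr_sumr; apply: eq_bigr => X _; rewrite !rmulE /hfun /= -scalerAl linearZ /=.
rewrite (eps_mul QB); ring.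
Qed.
Lemma inv_pent : teq4 (mul4 (HHD Delta phiinv) (L1 phi))
   (mul4 (mul4 (DHH Delta phi) (R1 phiinv)) (HDH Delta phiinv)).
Proof.
have P : teq4 (mul4 (HHD Delta phi) (DHH Delta phi))
              (mul4 (mul4 (L1 phi) (HDH Delta phi)) (R1 phi)) := pentagon QB.
have AA0 : teq4 (mul4 (HHD Delta phiinv) (HHD Delta phi)) (@one4 k H).
  by rewrite -(HHD_mul QB) (phi_inv_l QB) (HHD_one QB).
have EEi : teq4 (mul4 (R1 phi) (R1 phiinv)) (@one4 k H).
  by rewrite -R1_mul (phi_inv_r QB) R1_one.
have DDi : teq4 (mul4 (HDH Delta phi) (HDH Delta phiinv)) (@one4 k H).
  by rewrite -(HDH_mul QB) (phi_inv_r QB) (HDH_one QB).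
set A := HHD Delta phiinv; set A0 := HHD Delta phi; set B := DHH Delta phi.
set C := L1 phi; set D := HDH Delta phi; set E := R1 phi.
set Ei := R1 phiinv; set Di := HDH Delta phiinv.
transitivity (mul4 (mul4 A C) (mul4 D (mul4 (mul4 E Ei) Di))).
  by rewrite EEi mul4_1l DDi mul4_1r.
rewrite (mul4A E Ei Di) -(mul4A D E (mul4 Ei Di)) -(mul4A (mul4 A C) (mul4 D E) (mul4 Ei Di)).
rewrite (mul4A A C (mul4 D E)) -(mul4A C D E) -P -(mul4A A A0 B) AA0 mul4_1l.
by rewrite -mul4A.
Qed.
End QH.

Section MKL.
Variables (k : fieldType) (n : nat) (F : 'M[k]_n -> 'M[k]_n).
Hypothesis Fl : forall a x y, F (a *: x + y) = a *: F x + F y.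
Definition Ffun := F.
Lemma Ffun_lin : linear Ffun. Proof. move=> a x y; exact: Fl. Qed.
HB.instance Definition _ := GRing.isLinear.Build k 'M[k]_n 'M[k]_n *:%R Ffun Ffun_lin.
Definition mklin : {linear 'M[k]_n -> 'M[k]_n} := Ffun.

Lemma inj_surj : (forall x, F x = 0 -> x = 0) -> forall y, exists x, F x = y.
Proof.
move=> inj y; pose f := linfun mklin.
have kf : lker f == 0%VS.
  apply/lker0P => u v; rewrite !lfunE /= /Ffun => e.
  apply/eqP; rewrite -subr_eq0; apply/eqP; apply: inj.
  have h := Fl (-1) v u; rewrite !scaleN1r e addNr in h.
  by rewrite addrC.
exists ((f^-1)%VF y); have := lker0_lfunVK kf y; by rewrite lfunE.
Qed.
End MKL.

Section Main.
Variables (k : fieldType) (H : algType k).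
Variables (Delta : H -> tens2 H) (eps : H -> k) (phi phiinv : tens3 H).
Variables (S : H -> H) (alpha beta : H).
Hypothesis QB : quasibialgebra Delta eps phi phiinv.
Hypothesis QA : quasi_antipode Delta eps phi phiinv S alpha beta.

Lemma scalerAlr (a : k) (u v : H) : (a *: u) * v = a *: (u * v).
Proof. by rewrite scalerAl. Qed.
Lemma scalerArr (a : k) (u v : H) : u * (a *: v) = a *: (u * v).
Proof. by rewrite scalerAr. Qed.
Let SP := SP QA.

Definition Mlin (M : H -> H) := forall a x y, M (a *: x + y) = a *: M x + M y.
Ltac mlin := move=> ? ? ?; rewrite ?(mulrDl, mulrDr, SP, scalerAlr, scalerArr).

Lemma lin_fM (f : {scalar H}) M : Mlin M -> lin (fun x => f (M x)).
Proof. by move=> hM a x y; rewrite hM linearP. Qed.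
Lemma lin_sum (I : Type) (r : seq I) (L : I -> H -> k) :
  (forall i, lin (L i)) -> lin (fun x => \sum_(i <- r) L i x).
Proof.
move=> hL a x y; rewrite mulr_sumr -big_split; apply: eq_bigr => i _; exact: hL.
Qed.
Lemma lin_mulr (L : H -> k) c : lin L -> lin (fun x => L x * c).
Proof. by move=> hL a x y; rewrite hL mulrDl mulrA. Qed.
Lemma lin_mull (L : H -> k) c : lin L -> lin (fun x => c * L x).
Proof. by move=> hL a x y; rewrite hL mulrDr mulrCA. Qed.
Lemma linZ (L : H -> k) a x : lin L -> L (a *: x) = a * L x.
Proof. by move=> hL; have -> : L (a *: x) = mkscal hL (a *: x) by []; rewrite linearZ. Qed.

Definition Fm (f g : {scalar H}) a b c d := f (S a * alpha * b * beta * S c) * g d.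

Lemma Fm_lin f g :
  [/\ (forall b c d, lin (fun a => Fm f g a b c d)), (forall a c d, lin (fun b => Fm f g a b c d)),
      (forall a b d, lin (fun c => Fm f g a b c d)) & (forall a b c, lin (Fm f g a b c))].
Proof.
split=> *; rewrite /Fm.
- by apply: lin_mulr; apply: (lin_fM f); mlin.
- by apply: lin_mulr; apply: (lin_fM f); mlin.
- by apply: lin_mulr; apply: (lin_fM f); mlin.
- by apply: lin_mull; apply: linS.
Qed.

Definition qL : tens2 H := [seq (S p.1.1 * alpha * p.1.2, p.2) | p <- phiinv].
Definition Lam (f g : {scalar H}) c d := \sum_(X <- phi) \sum_(q <- Delta d)
   f (c * X.1.1 * beta * S (q.1 * X.1.2)) * g (q.2 * X.2).
Definition DDb b : tens3 H := [seq (p.1, q.1, q.2) | p <- Delta b, q <- Delta p.2].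
Definition DlDb b : tens3 H := [seq (q.1, q.2, p.2) | p <- Delta b, q <- Delta p.1].
Definition Wb b := mul4 (HHD Delta phiinv) (L1 (mul3 (DDb b) phi)).
Definition W'b b := mul4 (HHD Delta phiinv) (L1 (mul3 phi (DlDb b))).
Definition T0 := mul4 (HHD Delta phiinv) (L1 phi).
Definition T1 := mul4 (mul4 (DHH Delta phi) (R1 phiinv)) (HDH Delta phiinv).

Lemma stepA f g b : \sum_(r <- qL) \sum_(q <- Delta b) Lam f g (r.1 * q.1) (r.2 * q.2) =
  \sum_(p <- Wb b) Fm f g p.1.1.1 p.1.1.2 p.1.2 p.2.
Proof.
rewrite /qL big_map /Wb /mul4 big_allpairs_dep /HHD big_allpairs_dep.
apply: eq_bigr => x _.
transitivity (\sum_(q <- Delta b) \sum_(X <- phi) \sum_(s <- Delta x.2) \sum_(u <- Delta q.2)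
   f (S x.1.1 * alpha * x.1.2 * q.1 * X.1.1 * beta * S (s.1 * u.1 * X.1.2)) * g (s.2 * u.2 * X.2)).
  apply: eq_bigr => q _; rewrite /Lam; apply: eq_bigr => X _.
  have hl : lin (fun y => f (S x.1.1 * alpha * x.1.2 * q.1 * X.1.1 * beta * S (y * X.1.2))).
    by apply: (lin_fM f); mlin.
  have e := Delta_mul QB x.2 q.2 (mkscal hl) (rmul g X.2).
  rewrite ev2_mul in e; exact e.
under [RHS]eq_bigr => s _ do rewrite /L1 big_map /mul3 big_allpairs_dep /DDb big_allpairs_dep.
under [LHS]eq_bigr => q _ do rewrite exchange_big.
rewrite exchange_big; apply: eq_bigr => s _; apply: eq_bigr => q _.
rewrite exchange_big; apply: eq_bigr => u _; apply: eq_bigr => X _.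
by rewrite /Fm /= mulr1 !mulrA.
Qed.
Lemma Fm_transport f g t u : teq4 t u ->
  \sum_(p <- t) Fm f g p.1.1.1 p.1.1.2 p.1.2 p.2 = \sum_(p <- u) Fm f g p.1.1.1 p.1.1.2 p.1.2 p.2.
Proof. by case: (Fm_lin f g) => l1 l2 l3 l4; apply: transport4. Qed.

Lemma stepB f g b : \sum_(p <- Wb b) Fm f g p.1.1.1 p.1.1.2 p.1.2 p.2 =
  \sum_(p <- W'b b) Fm f g p.1.1.1 p.1.1.2 p.1.2 p.2.
Proof.
apply: Fm_transport; apply: mul4_cong => //; apply: L1_cong.
exact: (quasi_coassoc QB b).
Qed.

Lemma stepC f g b : \sum_(p <- W'b b) Fm f g p.1.1.1 p.1.1.2 p.1.2 p.2 =
  \sum_(p <- T0) Fm f (rmul g b) p.1.1.1 p.1.1.2 p.1.2 p.2.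
Proof.
rewrite /W'b /T0 /mul4 !big_allpairs_dep.
apply: eq_bigr => x _; apply: eq_bigr => s _.
rewrite /L1 !big_map /mul3 big_allpairs_dep; apply: eq_bigr => X _.
rewrite /DlDb big_allpairs_dep /=.
transitivity (\sum_(p <- Delta b) eps p.1 *
   (f (S x.1.1 * alpha * x.1.2 * X.1.1 * beta * S X.1.2 * S s.1) * g (s.2 * X.2 * p.2))).
  apply: eq_bigr => p _; rewrite /Fm /= -mulr_suml [RHS]mulrA; congr (_ * _); last by rewrite mulrA.
  transitivity (f (\sum_(v <- Delta p.1) (S x.1.1 * alpha * x.1.2 * X.1.1) *
       (v.1 * beta * S v.2) * (S X.1.2 * S s.1))).
    by rewrite linear_sum; apply: eq_bigr => v _; rewrite mulr1 !(SM QA) !mulrA.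
  rewrite -mulr_suml -mulr_sumr (antipode_beta QA) -scalerAr -scalerAl linearZ /=.
  by rewrite !mulrA.
rewrite /Fm /= mulr1.
transitivity (f (S x.1.1 * alpha * x.1.2 * X.1.1 * beta * S X.1.2 * S s.1) *
   \sum_(p <- Delta b) eps p.1 * lmul g (s.2 * X.2) p.2).
  by rewrite mulr_sumr; apply: eq_bigr => p _; rewrite lmulE; ring.
by rewrite (counit_l' QB) lmulE rmulE (SM QA) !mulrA.
Qed.

Lemma stepD f g : \sum_(p <- T0) Fm f g p.1.1.1 p.1.1.2 p.1.2 p.2 =
  \sum_(p <- T1) Fm f g p.1.1.1 p.1.1.2 p.1.2 p.2.
Proof. apply: Fm_transport; exact: (inv_pent QB). Qed.
Definition F2 (f g : {scalar H}) c d := \sum_(y <- phiinv) \sum_(z <- phiinv) \sum_(v <- Delta z.1.2)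
  f (S z.1.1 * S y.1.1 * alpha * y.1.2 * v.1 * beta * S v.2 * S y.2 * S c) * g (d * z.2).

Lemma stepE1 f g : \sum_(p <- T1) Fm f g p.1.1.1 p.1.1.2 p.1.2 p.2 =
  \sum_(Y <- phi) eps Y.1.1 * F2 f g Y.1.2 Y.2.
Proof.
rewrite /T1 /mul4 !big_allpairs_dep; apply: eq_bigr => Y _.
rewrite /F2 mulr_sumr.
under eq_bigr => c _ do rewrite /R1 big_map.
under eq_bigr => c _ do under eq_bigr => y _ do rewrite /HDH big_allpairs_dep.
rewrite exchange_big; apply: eq_bigr => y _.
rewrite mulr_sumr exchange_big; apply: eq_bigr => z _.
rewrite mulr_sumr exchange_big; apply: eq_bigr => v _.
rewrite /Fm /= -mulr_suml [RHS]mulrA; congr (_ * _); last by rewrite mulr1.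
transitivity (f (\sum_(c <- Delta Y.1.1) (S z.1.1 * S y.1.1) * (S c.1 * alpha * c.2) *
   (y.1.2 * v.1 * beta * S v.2 * S y.2 * S Y.1.2))).
  by rewrite linear_sum; apply: eq_bigr => c _; rewrite !(SM QA) !mulrA.
rewrite -mulr_suml -mulr_sumr (antipode_alpha QA) -scalerAr -scalerAl linearZ /=.
by rewrite !mulrA.
Qed.
Lemma stepE2 f g : \sum_(Y <- phi) eps Y.1.1 * F2 f g Y.1.2 Y.2 = F2 f g 1 1.
Proof.
have l1 : forall d, lin (fun c => F2 f g c d).
  by move=> d; rewrite /F2; do 3 (apply: lin_sum => ?); apply: lin_mulr; apply: (lin_fM f); mlin.
have l2 : forall c, lin (F2 f g c).
  move=> c; rewrite /F2; do 3 (apply: lin_sum => ?); apply: lin_mull.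
  exact: (linS (rmul g _)).
transitivity (\sum_(p <- [seq (eps p.1.1 *: p.1.2, p.2) | p <- phi]) F2 f g p.1 p.2).
  by rewrite big_map; apply: eq_bigr => Y _; rewrite (linZ _ _ (l1 _)).
by rewrite (transport2 l1 l2 (norm_phi_left QB)) /one2 big_seq1.
Qed.

Lemma stepE3 f g : F2 f g 1 1 = f 1 * g 1.
Proof.
rewrite /F2.
transitivity (\sum_(y <- phiinv) \sum_(z <- phiinv) eps z.1.2 *
   (f (S z.1.1 * (S y.1.1 * alpha * y.1.2 * beta * S y.2)) * g z.2)).
  apply: eq_bigr => y _; apply: eq_bigr => z _.
  rewrite -mulr_suml [RHS]mulrA mul1r; congr (_ * _).
  transitivity (f (\sum_(v <- Delta z.1.2) (S z.1.1 * S y.1.1 * alpha * y.1.2) *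
     (v.1 * beta * S v.2) * (S y.2 * S 1))).
    by rewrite linear_sum; apply: eq_bigr => v _; rewrite !mulrA.
  rewrite -mulr_suml -mulr_sumr (antipode_beta QA) -scalerAr -scalerAl linearZ /=.
  by rewrite (S1 QA) mulr1 !mulrA.
rewrite exchange_big /=.
transitivity (\sum_(z <- phiinv) eps z.1.2 * (f (S z.1.1) * g z.2)).
  apply: eq_bigr => z _; rewrite -mulr_sumr; congr (_ * _); rewrite -mulr_suml; congr (_ * _).
  rewrite -linear_sum -mulr_sumr.
  have := antipode_phiinv QA; rewrite /= => ->.
  by rewrite mulr1.
have l1 : forall d, lin (fun c => f (S c) * g d).
  by move=> d; apply: lin_mulr; apply: (lin_fM f); mlin.
have l2 : forall c, lin (fun d => f (S c) * g d).
  by move=> c; apply: lin_mull; apply: linS.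
transitivity (\sum_(p <- [seq (p.1.1, eps p.1.2 *: p.2) | p <- phiinv]) f (S p.1) * g p.2).
  by rewrite big_map; apply: eq_bigr => z _; rewrite linearZ /=; ring.
by rewrite (transport2 l1 l2 (norm_phiinv_mid QB)) /one2 big_seq1 /= (S1 QA).
Qed.

Lemma main_id f g b : \sum_(r <- qL) \sum_(q <- Delta b) Lam f g (r.1 * q.1) (r.2 * q.2) = f 1 * g b.
Proof.
by rewrite stepA stepB stepC stepD stepE1 stepE2 stepE3 rmulE mul1r.
Qed.
Definition Gam (t : tens2 H) : tens2 H :=
  flatten [seq mul2 (mul2 [:: (p.1, 1)] qL) (Delta p.2) | p <- t].

Lemma LamGam f g t : \sum_(z <- Gam t) Lam f g z.1 z.2 = \sum_(p <- t) f p.1 * g p.2.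
Proof.
rewrite /Gam big_flatten big_map; apply: eq_bigr => p _.
rewrite /mul2 big_allpairs_dep big_allpairs_dep big_seq1 /=.
transitivity (lmul f p.1 1 * g p.2); last by rewrite lmulE mulr1.
rewrite -main_id.
apply: eq_bigr => r _; apply: eq_bigr => q _ /=.
rewrite /Lam mul1r; apply: eq_bigr => X _; apply: eq_bigr => q' _.
by rewrite lmulE !mulrA.
Qed.

Lemma Lam_lin f g : (forall d, lin (fun c => Lam f g c d)) /\ (forall c, lin (Lam f g c)).
Proof.
split.
  by move=> d; rewrite /Lam; do 2 (apply: lin_sum => ?); apply: lin_mulr; apply: (lin_fM f); mlin.
move=> c; rewrite /Lam; apply: lin_sum => X.
have hl : lin (fun y => f (c * X.1.1 * beta * S (y * X.1.2))) by apply: (lin_fM f); mlin.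
exact: (Dsc_lin QB (mkscal hl) (rmul g X.2)).
Qed.

Lemma PsiGam (f : {scalar H}) t :
  \sum_(z <- Gam t) f (z.1 * beta * S z.2) = \sum_(p <- t) f p.1 * eps p.2.
Proof.
rewrite /Gam big_flatten big_map; apply: eq_bigr => p _.
rewrite /mul2 big_allpairs_dep big_allpairs_dep big_seq1 /= /qL big_map.
transitivity (f (\sum_(x <- phiinv) p.1 * (S x.1.1 * alpha * x.1.2) *
   (\sum_(q <- Delta p.2) q.1 * beta * S q.2) * S x.2)).
  rewrite linear_sum; apply: eq_bigr => x _; rewrite mulr_sumr mulr_suml linear_sum.
  by apply: eq_bigr => q _ /=; rewrite mul1r !(SM QA) !mulrA.
rewrite (antipode_beta QA).
transitivity (f (eps p.2 *: (p.1 * \sum_(x <- phiinv) S x.1.1 * alpha * x.1.2 * beta * S x.2))).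
  congr (f _); rewrite mulr_sumr scaler_sumr; apply: eq_bigr => x _.
  by rewrite scalerArr scalerAlr !mulrA.
by rewrite (antipode_phiinv QA) mulr1 linearZ /= mulrC.
Qed.
End Main.

Section Final.
Variables (k : fieldType) (H : algType k).
Variables (Delta : H -> tens2 H) (eps : H -> k) (phi phiinv : tens3 H).
Variables (S : H -> H) (alpha beta : H).
Hypothesis QB : quasibialgebra Delta eps phi phiinv.
Hypothesis QA : quasi_antipode Delta eps phi phiinv S alpha beta.
Variable K : pred H.
Hypothesis K1 : 1 \in K.
Hypothesis Kc : forall a x y, x \in K -> y \in K -> a *: x + y \in K.
Hypothesis Km : forall x y, x \in K -> y \in K -> x * y \in K.
Hypothesis KDelta : forall x, x \in K -> in_tensor2 K (Delta x).
Hypothesis qLK : in_tensor2 K (qL phiinv S alpha).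
Variables (n : nat) (w : 'I_n -> H) (g : 'I_n -> {scalar H}).
Hypothesis wK : forall i, w i \in K.
Hypothesis gw : forall i j, g i (w j) = (i == j)%:R.
Hypothesis rep : forall y, y \in K -> y = \sum_i g i y *: w i.

Let SPq := SP QA.
Ltac mlin := move=> ? ? ?; rewrite ?(mulrDl, mulrDr, SPq, scalerAlr, scalerArr).

Lemma K0 : 0 \in K.
Proof. by have := Kc (-1) K1 K1; rewrite scaleN1r addNr. Qed.
Lemma KZ a x : x \in K -> a *: x \in K.
Proof. by move=> hx; have := Kc a hx K0; rewrite addr0. Qed.
Lemma KD x y : x \in K -> y \in K -> x + y \in K.
Proof. by move=> hx hy; have := Kc 1 hx hy; rewrite scale1r. Qed.
Lemma Ksum (I : Type) (r : seq I) (F : I -> H) : (forall i, F i \in K) -> \sum_(i <- r) F i \in K.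
Proof. by move=> hF; apply: (big_ind (fun x => x \in K)); [exact: K0|exact: KD|]. Qed.

Definition coord (t : tens2 H) : 'M[k]_n := \matrix_(a, b) \sum_(p <- t) g a p.1 * g b p.2.
Definition tau (M : 'M[k]_n) : tens2 H :=
  [seq (M i j *: w i, w j) | i <- index_enum 'I_n, j <- index_enum 'I_n].

Lemma ev_tau M (F : H -> H -> k) : \sum_(p <- tau M) F p.1 p.2 = \sum_i \sum_j F (M i j *: w i) (w j).
Proof. by rewrite big_allpairs_dep. Qed.

Lemma sum_delta (a : 'I_n) (F : 'I_n -> k) : \sum_i (a == i)%:R * F i = F a.
Proof.
rewrite (bigD1 a) //= eqxx mul1r big1 ?addr0 // => i /negbTE.
by rewrite eq_sym => ->; rewrite mul0r.
Qed.

Lemma coord_tau M : coord (tau M) = M.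
Proof.
apply/matrixP => a b; rewrite mxE (ev_tau M (fun x y => g a x * g b y)).
transitivity (\sum_i (a == i)%:R * \sum_j (b == j)%:R * M i j).
  apply: eq_bigr => i _; rewrite mulr_sumr; apply: eq_bigr => j _.
  by rewrite linearZ /= !gw; ring.
by rewrite sum_delta sum_delta.
Qed.

Lemma coord_teq t t' : teq2 t t' -> coord t = coord t'.
Proof. by move=> h; apply/matrixP => a b; rewrite !mxE h. Qed.

Lemma tau_teq t : in_tensor2 K t -> teq2 t (tau (coord t)).
Proof.
move=> [u [uK tu]]; rewrite (coord_teq tu).
apply: (teq2_trans tu) => f f'; rewrite (ev_tau _ (fun x y => f x * f' y)).
transitivity (\sum_(p <- u) \sum_i \sum_j (g i p.1 * g j p.2) * (f (w i) * f' (w j))).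
  rewrite big_seq_cond [RHS]big_seq_cond; apply: eq_bigr => p /andP [pu _].
  have /andP [h1 h2] := uK p pu.
  rewrite {1}(rep h1) {1}(rep h2) !linear_sum mulr_suml; apply: eq_bigr => i _.
  rewrite mulr_sumr; apply: eq_bigr => j _; rewrite !linearZ /=; ring.
rewrite exchange_big; apply: eq_bigr => i _; rewrite exchange_big; apply: eq_bigr => j _.
by rewrite -mulr_suml mxE linearZ /= mulrA.
Qed.

Lemma inK_cat t t' : in_tensor2 K t -> in_tensor2 K t' -> in_tensor2 K (t ++ t').
Proof.
move=> [u [uK tu]] [u' [uK' tu']]; exists (u ++ u'); split.
  by move=> p; rewrite mem_cat => /orP [/uK|/uK'].
by move=> f f'; rewrite !big_cat tu tu'.
Qed.
Lemma inK_mul t t' : in_tensor2 K t -> in_tensor2 K t' -> in_tensor2 K (mul2 t t').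
Proof.
move=> [u [uK tu]] [u' [uK' tu']]; exists (mul2 u u'); split; last exact: mul2_cong.
move=> p /allpairsPdep [q [q' [qu qu' ->]]] /=.
have /andP [a1 a2] := uK q qu; have /andP [b1 b2] := uK' q' qu'.
by rewrite !Km.
Qed.

Lemma GamK t : (forall p, p \in t -> (p.1 \in K) && (p.2 \in K)) ->
  in_tensor2 K (Gam Delta phiinv S alpha t).
Proof.
elim: t => [|p t IH] ht; first by exists [::]; split.
rewrite /Gam /= -/(Gam Delta phiinv S alpha t); apply: inK_cat; last first.
  by apply: IH => q qt; apply: ht; rewrite inE qt orbT.
have /andP [p1 p2] := ht p (mem_head _ _).
apply: inK_mul; last exact: KDelta.
apply: inK_mul => //; exists [:: (p.1, 1)]; split => //.
by move=> q; rewrite inE => /eqP ->; rewrite /= p1 K1.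
Qed.

Lemma tauK M : forall p, p \in tau M -> (p.1 \in K) && (p.2 \in K).
Proof. by move=> p /allpairsPdep [i [j [_ _ ->]]] /=; rewrite KZ ?wK. Qed.

Definition Gc (c d : H) a b := \sum_(r <- qL phiinv S alpha) \sum_(q <- Delta d)
   g a (c * r.1 * q.1) * g b (1 * r.2 * q.2).
Definition Gm (M : 'M[k]_n) : 'M[k]_n :=
  \matrix_(a, b) \sum_i \sum_j M i j * Gc (w i) (w j) a b.

Lemma coordGam M : coord (Gam Delta phiinv S alpha (tau M)) = Gm M.
Proof.
apply/matrixP => a b; rewrite !mxE /Gam big_flatten big_map.
rewrite (ev_tau M (fun c d => \sum_(z <- mul2 (mul2 [:: (c, 1)] (qL phiinv S alpha)) (Delta d))
   g a z.1 * g b z.2)).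
apply: eq_bigr => i _; apply: eq_bigr => j _.
rewrite /mul2 big_allpairs_dep big_allpairs_dep big_seq1 /Gc mulr_sumr; apply: eq_bigr => r _.
rewrite mulr_sumr; apply: eq_bigr => q _ /=.
by rewrite -!scalerAl linearZ /= mulrA.
Qed.

Lemma Gm_lin a M N : Gm (a *: M + N) = a *: Gm M + Gm N.
Proof.
apply/matrixP => x y; rewrite !mxE mulr_sumr -big_split; apply: eq_bigr => i _.
rewrite mulr_sumr -big_split; apply: eq_bigr => j _; rewrite !mxE /=; ring.
Qed.

Lemma Gm_inj M : Gm M = 0 -> M = 0.
Proof.
move=> h0.
have e : teq2 (Gam Delta phiinv S alpha (tau M)) (tau 0).
  by rewrite -h0 -coordGam; apply: tau_teq; apply: GamK; apply: tauK.
have z : forall f f' : {scalar H}, \sum_(p <- tau M) f p.1 * f' p.2 = 0.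
  move=> f f'; rewrite -(LamGam QB QA).
  have [l1 l2] := Lam_lin QB QA f f'.
  rewrite (transport2 l1 l2 e) (ev_tau _ (Lam Delta phi S beta f f')) big1 // => i _.
  by rewrite big1 // => j _; rewrite mxE (linZ _ _ (l1 _)) mul0r.
by rewrite -(coord_tau M); apply/matrixP => a b; rewrite !mxE z.
Qed.

Lemma Gm_surj N : exists M, Gm M = N.
Proof. exact: (inj_surj Gm_lin Gm_inj). Qed.

Lemma key t : in_tensor2 K t -> \sum_(p <- t) p.1 * beta * S p.2 \in K.
Proof.
move=> tK; have [M hM] := Gm_surj (coord t).
have e : teq2 t (Gam Delta phiinv S alpha (tau M)).
  apply: (teq2_trans (tau_teq tK)); rewrite -hM -coordGam; apply: teq2_sym.
  by apply: tau_teq; apply: GamK; apply: tauK.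
have -> : \sum_(p <- t) p.1 * beta * S p.2 = \sum_i \sum_j eps (w j) *: (M i j *: w i).
  apply: sep => f; rewrite linear_sum.
  have l1 : forall d, lin (fun c => f (c * beta * S d)) by move=> d; apply: (lin_fM f); mlin.
  have l2 : forall c, lin (fun d => f (c * beta * S d)).
    by move=> c; apply: (lin_fM f); move=> ? ? ?; rewrite (SP QA) mulrDr scalerAr.
  rewrite (transport2 l1 l2 e) (PsiGam QA) (ev_tau _ (fun c d => f c * eps d)) linear_sum.
  apply: eq_bigr => i _; rewrite linear_sum; apply: eq_bigr => j _.
  by rewrite [RHS]linearZ /= mulrC.
by apply: Ksum => i; apply: Ksum => j; apply: KZ; apply: KZ.
Qed.
End Final.

Unset Implicit Arguments.

Theorem proposition2p3 (k : fieldType) (H : algType k)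
  (Delta : H -> seq (H * H)%type) (eps : H -> k) (phi phiinv : seq (H * H * H)%type)
  (S : H -> H) (alpha beta : H) (K : pred H) :
  quasi_hopf Delta eps phi phiinv S alpha beta ->
  subquasibialgebra Delta phi K ->
  finite_dim K ->
  in_tensor2 K [seq (S p.1.1 * alpha * p.1.2, p.2) | p <- phiinv] ->
  [/\ alpha \in K, beta \in K & forall x : H, x \in K -> S x \in K].
Proof.
move=> [QB QA] [K1 Kc Km KDelta Kphi] [s [sK sspan]] qLK.
have [n [w [g [ws gw rep0]]]] := dual_sys s.
have wK : forall i, w i \in K by move=> i; apply: sK; apply: ws.
have rep : forall y, y \in K -> y = \sum_i g i y *: w i.
  by move=> y yK; apply: rep0; have [c ->] := sspan y yK; apply: inspan_sum.
have key' := key QB QA K1 Kc Km KDelta qLK wK gw rep.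
have Ksum : forall (r : seq (H * H)) (F : H * H -> H), (forall p, p \in r -> F p \in K) ->
    \sum_(p <- r) F p \in K.
  move=> r F; elim: r => [|p r IH] hF; first by rewrite big_nil; exact: (K0 K1 Kc).
  rewrite big_cons; apply: (KD Kc); first by apply: hF; rewrite inE eqxx.
  by apply: IH => q qr; apply: hF; rewrite inE qr orbT.
have [u0 [u0K equ]] := qLK.
split.
- have e1 : alpha = \sum_(p <- qL phiinv S alpha) eps p.2 *: p.1.
    apply: (sep (H := H)) => f; rewrite linear_sum /qL big_map.
    have l1 : forall d, lin (fun c => f (S c * alpha * d)).
      by move=> d; apply: (lin_fM f) => a x y; rewrite (SP QA) !mulrDl -!scalerAl.
    have l2 : forall c, lin (fun d => f (S c * alpha * d)).
      by move=> c; apply: (lin_fM f) => a x y; rewrite mulrDr -scalerAr.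
    have := transport2 l1 l2 (norm_phiinv_right QB).
    rewrite big_map /one2 big_seq1 /= (S1 QA) mul1r mulr1 => <-.
    by apply: eq_bigr => x _; rewrite -scalerAr.
  have e2 : \sum_(p <- qL phiinv S alpha) eps p.2 *: p.1 = \sum_(p <- u0) eps p.2 *: p.1.
    apply: (sep (H := H)) => f; rewrite !linear_sum.
    have := equ f (epsc QB); move=> e.
    transitivity (\sum_(p <- qL phiinv S alpha) f p.1 * epsc QB p.2).
      by apply: eq_bigr => p _; rewrite linearZ /= mulrC.
    rewrite e; apply: eq_bigr => p _; by rewrite linearZ /= mulrC.
  rewrite e1 e2; apply: Ksum => p pu; have /andP [h1 h2] := u0K p pu.
  exact: (KZ K1 Kc _ h1).
- have := key' (one2 H); rewrite /one2 big_seq1 /= (S1 QA) mulr1 mul1r; apply.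
  by exists (one2 H); split => // p; rewrite inE => /eqP -> /=; rewrite K1.
move=> x xK.
have tK : in_tensor2 K [seq (r.1, x * r.2) | r <- qL phiinv S alpha].
  exists [seq (r.1, x * r.2) | r <- u0]; split.
    move=> p /mapP [r ru ->] /=; have /andP [h1 h2] := u0K r ru.
    by rewrite h1 Km.
  move=> f f'; rewrite big_map [RHS]big_map; exact (equ f (lmul f' x)).
have := key' _ tK; rewrite big_map /qL big_map.
suff -> : \sum_(j <- phiinv) S j.1.1 * alpha * j.1.2 * beta * S (x * j.2) = S x by [].
rewrite -[RHS]mul1r -(antipode_phiinv QA) mulr_suml; apply: eq_bigr => p _.
by rewrite (SM QA) !mulrA.
Qed.
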